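(* Let $\lambda(\beta,\theta,\gamma)$ be the Perron root associated to the generator $\mathcal{L}$ in the context. Then for all $\beta,\theta,\gamma>0$: $$\lambda(\beta,\theta+\delta,\gamma)\le\lambda(\beta,\theta,\gamma)-\delta\quad\text{for all }\delta>0,$$ $$\lambda(\beta,\theta-\delta,\gamma)\ge\lambda(\beta,\theta,\gamma)+\delta\quad\text{for all }\delta\in(0,\theta).$$
   Context: For parameters $\beta,\theta,\gamma>0$, $\mathcal{L}f(n)=\beta n(f(n+1)-f(n))-\theta nf(n)+\sum_{j=1}^{n-1}\frac{\gamma n}{j(j+1)}(f(j)+f(n-j)-f(n))$ on functions $f:\mathbb{N}_+\to\mathbb{R}$; it generates the first moment semigroup $(M_t)$ of the active cluster-size process of the GFI process (a cluster of size $n$ is isolated at rate $\theta n$, grows at rate $\beta n$, splits into sizes $n-j,j$ at rate $\gamma n/(j(j+1))$). The Perron root $\lambda(\beta,\theta,\gamma)$ is the unique real number for which there exist a probability vector $\pi>0$ on $\mathbb{N}_+$ and a positive function $h$ bounded above and below by positive constants with $\pi M_t=e^{\lambda t}\pi$ and $M_th=e^{\lambda t}h$ for all $t\ge0$. *)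

(* Defs.v *)
From Stdlib Require Import Reals.
From Coquelicot Require Import Coquelicot.
Open Scope R_scope.

(* Cluster sizes are the natural numbers n >= 1; values at index 0 are ignored. *)

Definition Lgen (beta theta gamma : R) (f : nat -> R) (n : nat) : R :=
  beta * INR n * (f (S n) - f n) - theta * INR n * f n
  + sum_n_m (fun j : nat => gamma * INR n / (INR j * INR (S j))
                            * (f j + f (n - j)%nat - f n)) 1 (n - 1).

Definition solves_backward (beta theta gamma : R) (M : R -> nat -> nat -> R) : Prop :=
  (forall n m : nat, (1 <= n)%nat -> (1 <= m)%nat ->
     M 0 n m = if Nat.eqb n m then 1 else 0) /\
  (forall n m : nat, (1 <= n)%nat -> (1 <= m)%nat ->
     filterlim (fun t => M t n m) (at_right 0) (locally (M 0 n m))) /\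
  (forall (t : R) (n m : nat), 0 < t -> (1 <= n)%nat -> (1 <= m)%nat ->
     is_derive (fun s => M s n m) t (Lgen beta theta gamma (fun k => M t k m) n)).

Definition nonneg_kernel (M : R -> nat -> nat -> R) : Prop :=
  forall (t : R) (n m : nat), 0 <= t -> (1 <= n)%nat -> (1 <= m)%nat -> 0 <= M t n m.

(* The first moment semigroup (M_t) generated by L: the minimal nonnegative
   solution of the backward equation (Feller's minimal solution, which is the
   expectation kernel of the active cluster-size process). *)
Definition first_moment_semigroup (beta theta gamma : R) (M : R -> nat -> nat -> R) : Prop :=
  solves_backward beta theta gamma M /\ nonneg_kernel M /\
  (forall N : R -> nat -> nat -> R,
     solves_backward beta theta gamma N -> nonneg_kernel N ->
     forall (t : R) (n m : nat), 0 <= t -> (1 <= n)%nat -> (1 <= m)%nat ->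
       M t n m <= N t n m).

Definition Perron_root (beta theta gamma lam : R) : Prop :=
  exists M : R -> nat -> nat -> R,
    first_moment_semigroup beta theta gamma M /\
    exists (pi h : nat -> R),
      (forall n : nat, (1 <= n)%nat -> 0 < pi n) /\
      is_series (fun k : nat => pi (S k)) 1 /\
      (exists c C : R, 0 < c /\ 0 < C /\
         forall n : nat, (1 <= n)%nat -> c <= h n <= C) /\
      (forall (t : R) (m : nat), 0 <= t -> (1 <= m)%nat ->
         is_series (fun k : nat => pi (S k) * M t (S k) m) (exp (lam * t) * pi m)) /\
      (forall (t : R) (n : nat), 0 <= t -> (1 <= n)%nat ->
         is_series (fun k : nat => M t n (S k) * h (S k)) (exp (lam * t) * h n)).

(* Main.v *)
Require Import Defs.
From Stdlib Require Import Reals Lra Lia Classical Arith.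
From Coquelicot Require Import Coquelicot.
Open Scope R_scope.

Lemma exp_mono x y : x <= y -> exp x <= exp y.
Proof. intros [H|H]. left; apply exp_increasing; auto. subst; lra. Qed.

Lemma series_le (a b : nat -> R) la lb :
  is_series a la -> is_series b lb -> (forall n, a n <= b n) -> la <= lb.
Proof.
  intros Ha Hb H.
  assert (H0 : Rbar_le la lb).
  { apply (is_lim_seq_le (sum_n a) (sum_n b)).
    - intros n. unfold sum_n. apply sum_n_m_le. exact H.
    - exact Ha. - exact Hb. }
  exact H0.
Qed.

Lemma sum_n_nonneg_mono (a : nat -> R) : (forall n, 0 <= a n) ->
  forall k n, (k <= n)%nat -> sum_n a k <= sum_n a n.
Proof. intros Ha k n Hkn. induction Hkn. lra. rewrite sum_Sn. unfold plus; simpl.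
  specialize (Ha (S m)). lra. Qed.

Lemma term_le_sum (a : nat -> R) k : (forall n, 0 <= a n) -> a k <= sum_n a k.
Proof. intros Ha. destruct k. rewrite sum_O. lra. rewrite sum_Sn. unfold plus; simpl.
  assert (0 <= sum_n a k).
  { induction k. rewrite sum_O; auto. rewrite sum_Sn. unfold plus; simpl.
    specialize (Ha (S k)). lra. }
  lra. Qed.

Lemma term_le_series (a : nat -> R) (l : R) k : is_series a l -> (forall n, 0 <= a n) -> a k <= l.
Proof. intros Hs Ha.
  assert (H : Rbar_le (sum_n a k) l).
  { apply (is_lim_seq_le_loc (fun _ => sum_n a k) (sum_n a)).
    exists k. intros n Hn. apply sum_n_nonneg_mono; auto.
    apply is_lim_seq_const. exact Hs. }
  simpl in H. pose proof (term_le_sum a k Ha). lra. Qed.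

Lemma sum_lin (u v w : nat -> R) a c n m :
  sum_n_m (fun j => a*u j - v j - c*w j) n m
  = a * sum_n_m u n m - sum_n_m v n m - c * sum_n_m w n m.
Proof.
  rewrite (sum_n_m_ext _ (fun j => plus (plus (mult a (u j)) (mult (-1) (v j))) (mult (-c) (w j)))).
  - rewrite !sum_n_m_plus, !sum_n_m_mult_l. unfold plus, mult; simpl.
    change (@sum_n_m (Ring.AbelianMonoid R_Ring)) with (@sum_n_m R_AbelianMonoid). ring.
  - intros j. unfold plus, mult; simpl. ring.
Qed.

Lemma Lgen_theta b th1 th2 g f n :
  Lgen b th2 g f n = Lgen b th1 g f n - (th2 - th1) * INR n * f n.
Proof. unfold Lgen. ring. Qed.

Lemma Lgen_lin b th g (f1 f2 f3 : nat -> R) a c n :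
  Lgen b th g (fun k => a * f1 k - f2 k - c * f3 k) n
  = a * Lgen b th g f1 n - Lgen b th g f2 n - c * Lgen b th g f3 n.
Proof.
  unfold Lgen.
  rewrite (sum_n_m_ext _ (fun j =>
     a * (g * INR n / (INR j * INR (S j)) * (f1 j + f1 (n - j)%nat - f1 n))
     - (g * INR n / (INR j * INR (S j)) * (f2 j + f2 (n - j)%nat - f2 n))
     - c * (g * INR n / (INR j * INR (S j)) * (f3 j + f3 (n - j)%nat - f3 n)))).
  - rewrite sum_lin. ring.
  - intros j. simpl. unfold Rdiv. ring.
Qed.

Lemma Lgen_INR b th g n : (1 <= n)%nat ->
  Lgen b th g INR n = b * INR n - th * INR n * INR n.
Proof.
  intros Hn. unfold Lgen.
  rewrite (sum_n_m_ext_loc _ (fun _ => 0)).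
  - rewrite sum_n_m_const. rewrite S_INR. ring.
  - intros k Hk. simpl. rewrite minus_INR by lia. ring.
Qed.

Lemma sum_nonpos_loc (a : nat -> R) n m :
  (forall k, (n <= k <= m)%nat -> a k <= 0) -> sum_n_m a n m <= 0.
Proof.
  induction m; intros H.
  - destruct n. rewrite sum_n_n. apply H; lia.
    rewrite sum_n_m_zero by lia. apply Rle_refl.
  - destruct (le_lt_dec n (S m)).
    + destruct (Nat.eq_dec n (S m)).
      * subst. rewrite sum_n_n. apply H; lia.
      * rewrite sum_n_Sm by lia. unfold plus; simpl.
        assert (sum_n_m a n m <= 0) by (apply IHm; intros; apply H; lia).
        assert (a (S m) <= 0) by (apply H; lia). lra.
    + rewrite sum_n_m_zero by lia. apply Rle_refl.
Qed.

Lemma Lgen_nonpos b th g f n : 0 <= b -> 0 <= g -> (1 <= n)%nat -> f n = 0 ->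
  (forall k, (1 <= k)%nat -> f k <= 0) -> Lgen b th g f n <= 0.
Proof.
  intros Hb Hg Hn Hfn Hf. unfold Lgen. rewrite Hfn.
  assert (H1 : sum_n_m (fun j : nat => g * INR n / (INR j * INR (S j))
                            * (f j + f (n - j)%nat - 0)) 1 (n - 1) <= 0).
  { apply sum_nonpos_loc. intros k Hk.
    assert (Hc : 0 <= g * INR n / (INR k * INR (S k))).
    { apply Rdiv_le_0_compat. apply Rmult_le_pos; auto. apply pos_INR.
      apply Rmult_lt_0_compat; apply lt_0_INR; lia. }
    assert (f k <= 0) by (apply Hf; lia).
    assert (f (n - k)%nat <= 0) by (apply Hf; lia). nra. }
  assert (f (S n) <= 0) by (apply Hf; lia).
  assert (0 <= b * INR n) by (apply Rmult_le_pos; auto; apply pos_INR).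
  nra.
Qed.

Lemma flim_mult {T} (F : (T -> Prop) -> Prop) {FF : Filter F} (f g : T -> R) x y :
  filterlim f F (locally x) -> filterlim g F (locally y) ->
  filterlim (fun s => f s * g s) F (locally (x * y)).
Proof. intros Hf Hg. apply (filterlim_comp_2 f g Rmult Hf Hg).
  apply (@filterlim_mult R_AbsRing x y). Qed.

Lemma flim_minus {T} (F : (T -> Prop) -> Prop) {FF : Filter F} (f g : T -> R) x y :
  filterlim f F (locally x) -> filterlim g F (locally y) ->
  filterlim (fun s => f s - g s) F (locally (x - y)).
Proof. intros Hf Hg.
  assert (Hg' : filterlim (fun s => - g s) F (locally (- y))).
  { apply (filterlim_comp _ _ _ g Ropp F (locally y)). auto. apply (@filterlim_opp R_AbsRing R_NormedModule y). }
  apply (filterlim_comp_2 f (fun s => - g s) Rplus Hf Hg').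
  apply (@filterlim_plus R_AbsRing R_NormedModule x (- y)). Qed.

Lemma locally_neg (y : R) : y < 0 -> locally y (fun z => z < 0).
Proof. intros Hy. assert (H : 0 < - y) by lra. exists (mkposreal _ H).
  intros z Hz. unfold ball in Hz; simpl in Hz. unfold AbsRing_ball, abs, minus, plus, opp in Hz; simpl in Hz.
  apply Rabs_def2 in Hz. lra. Qed.

Lemma locally_pos (y : R) : 0 < y -> locally y (fun z => 0 < z).
Proof. intros Hy. exists (mkposreal _ Hy).
  intros z Hz. unfold ball in Hz; simpl in Hz. unfold AbsRing_ball, abs, minus, plus, opp in Hz; simpl in Hz.
  apply Rabs_def2 in Hz. lra. Qed.

Lemma ev_neg {T} (F : (T -> Prop) -> Prop) (f : T -> R) (y : R) :
  filterlim f F (locally y) -> y < 0 -> F (fun s => f s < 0).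
Proof. intros H Hy. apply (H (fun z => z < 0)). apply locally_neg; auto. Qed.

Lemma ev_pos {T} (F : (T -> Prop) -> Prop) (f : T -> R) (y : R) :
  filterlim f F (locally y) -> 0 < y -> F (fun s => 0 < f s).
Proof. intros H Hy. apply (H (fun z => 0 < z)). apply locally_pos; auto. Qed.

Lemma filter_fin {T} (F : (T -> Prop) -> Prop) {FF : Filter F} (P : nat -> T -> Prop) N :
  (forall n, (1 <= n <= N)%nat -> F (P n)) ->
  F (fun x => forall n, (1 <= n <= N)%nat -> P n x).
Proof.
  induction N; intros H.
  - apply filter_forall. intros x n Hn. lia.
  - assert (H1 : F (fun x => forall n, (1 <= n <= N)%nat -> P n x)) by (apply IHN; intros; apply H; lia).
    assert (H2 : F (P (S N))) by (apply H; lia).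
    generalize (filter_and _ _ H1 H2). apply filter_imp.
    intros x [Ha Hb] n Hn. destruct (Nat.eq_dec n (S N)). subst; auto. apply Ha; lia.
Qed.

Lemma locally_ball (t : R) (P : R -> Prop) : locally t P ->
  exists e, 0 < e /\ forall s, Rabs (s - t) < e -> P s.
Proof. intros [e He]. exists e. split. apply cond_pos. intros s Hs. apply He.
  unfold ball; simpl. unfold AbsRing_ball, abs, minus, plus, opp; simpl. exact Hs. Qed.

Lemma flim_at_right_id : filterlim (fun s => s) (at_right 0) (locally 0).
Proof. intros P HP. unfold filtermap, at_right, within. revert HP. apply filter_imp. auto. Qed.

Lemma flim_exp_lin {T} (F : (T -> Prop) -> Prop) {FF : Filter F} (f : T -> R) (c x : R) :
  filterlim f F (locally x) -> filterlim (fun s => exp (c * f s)) F (locally (exp (c * x))).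
Proof. intros Hf. apply (filterlim_comp _ _ _ f (fun s => exp (c * s)) F (locally x)). auto.
  apply (ex_derive_continuous (fun s => exp (c * s))). auto_derive. auto. Qed.

Lemma deriv_sign (f : R -> R) t0 D : derivable_pt_lim f t0 D -> 0 < t0 -> f t0 = 0 ->
  (forall s, 0 <= s < t0 -> f s < 0) -> 0 <= D.
Proof.
  intros Hd Ht0 Hf0 Hneg. destruct (Rle_or_lt 0 D) as [H|H]; auto. exfalso.
  destruct (Hd (-D) ltac:(lra)) as [del Hdel].
  pose proof (cond_pos del) as Hdp.
  set (h := - Rmin (del/2) (t0/2)).
  assert (Hh1 : h < 0) by (unfold h; apply Ropp_lt_gt_0_contravar; apply Rmin_pos; lra).
  assert (Hh2 : Rabs h < del).
  { rewrite Rabs_left by auto. unfold h. rewrite Ropp_involutive.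
    pose proof (Rmin_l (del/2) (t0/2)). lra. }
  assert (Hh3 : - h <= t0/2) by (unfold h; rewrite Ropp_involutive; apply Rmin_r).
  specialize (Hdel h ltac:(lra) Hh2).
  assert (Hfn : f (t0 + h) < 0) by (apply Hneg; lra).
  rewrite Hf0 in Hdel. apply Rabs_def2 in Hdel. destruct Hdel as [Hq _].
  assert (Hi : / h < 0) by (apply Rinv_lt_0_compat; auto).
  assert (0 < (f (t0 + h) - 0) / h).
  { unfold Rdiv. replace (f (t0 + h) - 0) with (f (t0+h)) by ring. nra. }
  lra.
Qed.

Definition wf (M M2 : R -> nat -> nat -> R) dl K eps m t n :=
  exp (dl * t) * M2 t n m - M t n m - (eps * exp (K * t)) * INR n.

Lemma key b th dl g M M2 eps m :
  0 <= b -> 0 <= th -> 0 <= g -> 0 <= dl -> 0 < eps -> (1 <= m)%nat ->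
  solves_backward b th g M -> nonneg_kernel M ->
  solves_backward b (th+dl) g M2 -> nonneg_kernel M2 ->
  (forall T, 0 <= T -> exists B, forall t n, 0 <= t <= T -> (1<=n)%nat -> M2 t n m <= B) ->
  forall t1 n1, 0 <= t1 -> (1 <= n1)%nat -> wf M M2 dl (b+1) eps m t1 n1 < 0.
Proof.
  intros Hb Hth Hg Hdl Heps Hm [HM0 [HMc HMd]] HMn [HM20 [HM2c HM2d]] HM2n HB t1 n1 Ht1 Hn1.
  set (K := b + 1).
  assert (HK : 0 < K) by (unfold K; lra).
  set (w := wf M M2 dl K eps m).
  assert (Hw0 : forall n, (1 <= n)%nat -> w 0 n < 0).
  { intros n Hn. unfold w, wf. rewrite HM0, HM20 by lia. rewrite !Rmult_0_r, exp_0.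
    assert (0 < INR n) by (apply lt_0_INR; lia). nra. }
  assert (Hcont : forall t n, 0 < t -> (1 <= n)%nat ->
            filterlim (fun s => w s n) (locally t) (locally (w t n))).
  { intros t n Ht Hn. unfold w, wf.
    refine (flim_minus _ _ _ _ _ _ _). refine (flim_minus _ _ _ _ _ _ _). refine (flim_mult _ _ _ _ _ _ _).
    refine (flim_exp_lin _ _ _ _ _). apply filterlim_id.
    apply (ex_derive_continuous (fun s => M2 s n m)). eexists. apply HM2d; auto.
    apply (ex_derive_continuous (fun s => M s n m)). eexists. apply HMd; auto.
    refine (flim_mult _ _ _ _ _ _ _). refine (flim_mult _ _ _ _ _ _ _). apply filterlim_const.
    refine (flim_exp_lin _ _ _ _ _). apply filterlim_id. apply filterlim_const. }
  assert (Hcont0 : forall n, (1 <= n)%nat ->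
            filterlim (fun s => w s n) (at_right 0) (locally (w 0 n))).
  { intros n Hn. unfold w, wf.
    refine (flim_minus _ _ _ _ _ _ _). refine (flim_minus _ _ _ _ _ _ _). refine (flim_mult _ _ _ _ _ _ _).
    refine (flim_exp_lin _ _ _ _ _). apply flim_at_right_id.
    apply HM2c; auto. apply HMc; auto.
    refine (flim_mult _ _ _ _ _ _ _). refine (flim_mult _ _ _ _ _ _ _). apply filterlim_const.
    refine (flim_exp_lin _ _ _ _ _). apply flim_at_right_id. apply filterlim_const. }
  destruct (Rlt_or_le (w t1 n1) 0) as [Hlt|H1]; [exact Hlt|exfalso].
  destruct (HB t1 Ht1) as [B HBd].
  destruct (INR_unbounded (exp (dl*t1) * B / eps)) as [N HN].
  assert (HNe : eps * INR N > exp (dl*t1) * B).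
  { replace (exp (dl*t1) * B) with (eps * (exp (dl*t1) * B / eps)) by (field; lra).
    apply Rmult_gt_compat_l; auto. }
  assert (Hbig : forall t n, 0 <= t <= t1 -> (1 <= n)%nat -> (N < n)%nat -> w t n < 0).
  { intros t n Ht Hn HNn. unfold w, wf.
    assert (HMp : 0 <= M t n m) by (apply HMn; [lra|lia|lia]).
    assert (HM2p : 0 <= M2 t n m) by (apply HM2n; [lra|lia|lia]).
    assert (HM2B : M2 t n m <= B) by (apply HBd; auto).
    assert (He1 : exp (dl*t) <= exp (dl*t1)) by (apply exp_mono; nra).
    assert (He2 : 1 <= exp (K*t)) by (rewrite <- exp_0; apply exp_mono; nra).
    assert (HnN : INR N < INR n) by (apply lt_INR; lia).
    assert (Hep : 0 < exp (dl*t)) by apply exp_pos.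
    assert (exp (dl*t) * M2 t n m <= exp (dl*t1) * B).
    { apply Rle_trans with (exp (dl*t1) * M2 t n m). nra. 
      apply Rmult_le_compat_l. left; apply exp_pos. auto. }
    assert (eps * INR n <= eps * exp (K * t) * INR n).
    { assert (0 < INR n) by (apply lt_0_INR; lia).
      replace (eps * INR n) with (eps * 1 * INR n) by ring.
      apply Rmult_le_compat_r. lra. apply Rmult_le_compat_l; lra. }
    assert (eps * INR N < eps * INR n) by (apply Rmult_lt_compat_l; auto).
    lra. }
  assert (Hn1N : (n1 <= N)%nat).
  { destruct (le_lt_dec n1 N); auto. exfalso. assert (w t1 n1 < 0) by (apply Hbig; auto; lra). lra. }
  assert (Ht1p : 0 < t1).
  { destruct Ht1 as [Ht1|Ht1]; auto. subst t1. exfalso. specialize (Hw0 n1 Hn1). lra. }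
  set (E := fun t => 0 <= t <= t1 /\
         forall s n, 0 <= s <= t -> (1 <= n <= N)%nat -> w s n < 0).
  assert (HE0 : E 0).
  { split. lra. intros s n Hs Hn. replace s with 0 by lra. apply Hw0; lia. }
  assert (Hbound : bound E).
  { exists t1. intros x [Hx _]. lra. }
  destruct (completeness E Hbound (ex_intro _ 0 HE0)) as [t0 [Hub Hlub]].
  assert (Ht00 : 0 <= t0) by (apply Hub; exact HE0).
  assert (Ht0t1 : t0 <= t1) by (apply Hlub; intros x [Hx _]; lra).
  assert (C2 : forall s n, 0 <= s < t0 -> (1 <= n <= N)%nat -> w s n < 0).
  { intros s n Hs Hn.
    destruct (classic (exists e, E e /\ s < e)) as [[e [[_ He] Hse]]|Hno].
    - apply He; auto. lra.
    - exfalso. assert (t0 <= s).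
      { apply Hlub. intros x Hx. destruct (Rle_or_lt x s) as [Hxs|Hxs]; auto.
        exfalso; apply Hno; exists x; auto. }
      lra. }
  assert (C1 : 0 < t0).
  { assert (HF := filter_fin (at_right 0) (fun n s => w s n < 0) N
              (fun n Hn => ev_neg _ _ _ (Hcont0 n (proj1 Hn)) (Hw0 n (proj1 Hn)))).
    unfold at_right, within in HF.
    destruct (locally_ball 0 _ HF) as [e [He HP]].
    set (s0 := Rmin (e/2) t1).
    assert (Hs0 : 0 < s0) by (apply Rmin_pos; lra).
    assert (Hs0e : s0 <= e/2) by apply Rmin_l.
    assert (Hs0t : s0 <= t1) by apply Rmin_r.
    assert (E s0).
    { split. lra. intros s n Hs Hn.
      destruct (Req_dec s 0) as [->|Hs0'].
      - apply Hw0; lia.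
      - apply HP; auto. rewrite Rminus_0_r, Rabs_right by lra. lra. lra. }
    assert (s0 <= t0) by (apply Hub; auto). lra. }
  assert (C3 : forall n, (1 <= n <= N)%nat -> w t0 n <= 0).
  { intros n Hn. destruct (Rle_or_lt (w t0 n) 0) as [H|H]; auto. exfalso.
    destruct (locally_ball t0 _ (ev_pos _ _ _ (Hcont t0 n C1 (proj1 Hn)) H)) as [e [He HP]].
    set (s := Rmax (t0/2) (t0 - e/2)).
    assert (Hs1 : t0/2 <= s) by apply Rmax_l.
    assert (Hs2 : t0 - e/2 <= s) by apply Rmax_r.
    assert (Hs3 : s < t0) by (apply Rmax_lub_lt; lra).
    assert (0 < w s n) by (apply HP; rewrite Rabs_left by lra; lra).
    assert (w s n < 0) by (apply C2; auto; lra). lra. }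
  assert (C4 : exists ns, (1 <= ns <= N)%nat /\ 0 <= w t0 ns).
  { destruct (classic (exists ns, (1 <= ns <= N)%nat /\ 0 <= w t0 ns)) as [Hex|Hno]; auto.
    exfalso.
    assert (Hall : forall n, (1 <= n <= N)%nat -> w t0 n < 0).
    { intros n Hn. destruct (Rlt_or_le (w t0 n) 0) as [H|H]; auto. exfalso; apply Hno; eauto. }
    destruct (Req_dec t0 t1) as [Heq|Hne].
    - subst t0. assert (w t1 n1 < 0) by (apply Hall; lia). lra.
    - assert (HF := filter_fin (locally t0) (fun n s => w s n < 0) N
              (fun n Hn => ev_neg _ _ _ (Hcont t0 n C1 (proj1 Hn)) (Hall n Hn))).
      destruct (locally_ball t0 _ HF) as [e [He HP]].
      set (s' := Rmin (t0 + e/2) t1).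
      assert (Hs1 : s' <= t0 + e/2) by apply Rmin_l.
      assert (Hs2 : s' <= t1) by apply Rmin_r.
      assert (Hs3 : t0 < s') by (apply Rmin_glb_lt; lra).
      assert (E s').
      { split. lra. intros s n Hs Hn.
        destruct (Rlt_or_le s t0) as [Hst|Hst].
        - apply C2; auto; lra.
        - apply HP; auto. rewrite Rabs_right by lra. lra. }
      assert (s' <= t0) by (apply Hub; auto). lra. }
  destruct C4 as [ns [Hns Hwns]].
  assert (Hwz : w t0 ns = 0) by (pose proof (C3 ns Hns); lra).
  assert (C5 : forall k, (1 <= k)%nat -> w t0 k <= 0).
  { intros k Hk. destruct (le_lt_dec k N). apply C3; lia. left; apply Hbig; auto; lra. }
  assert (Hde : is_derive (fun s => exp (dl * s)) t0 (dl * exp (dl * t0))).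
  { auto_derive. auto. ring. }
  assert (HdK : is_derive (fun s => eps * exp (K * s) * INR ns) t0 (eps * (K * exp (K * t0)) * INR ns)).
  { auto_derive. auto. ring. }
  assert (Hns1 : (1 <= ns)%nat) by lia.
  pose proof (is_derive_mult _ _ t0 _ _ Hde (HM2d t0 ns m C1 Hns1 Hm) Rmult_comm) as Hp.
  pose proof (is_derive_minus _ _ t0 _ _ (is_derive_minus _ _ t0 _ _ Hp (HMd t0 ns m C1 Hns1 Hm)) HdK) as Hd.
  apply is_derive_Reals in Hd.
  pose proof (deriv_sign (fun s => w s ns) t0 _ Hd C1 Hwz
                (fun s Hs => C2 s ns Hs Hns)) as HD.
  unfold minus, plus, opp, mult in HD; simpl in HD.
  rewrite (Lgen_theta b th (th+dl)) in HD.
  assert (HLw : exp (dl * t0) * Lgen b th g (fun k => M2 t0 k m) ns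
                - Lgen b th g (fun k => M t0 k m) ns
                - (eps * exp (K * t0)) * Lgen b th g INR ns <= 0).
  { rewrite <- Lgen_lin. apply Lgen_nonpos; auto; try exact Hwz;
    try (intros k Hk; apply (C5 k Hk)). }
  rewrite Lgen_INR in HLw by auto.
  set (e := exp (dl * t0)) in *.
  set (c := eps * exp (K * t0)) in *.
  set (L1 := Lgen b th g (fun k => M t0 k m) ns) in *.
  set (L2 := Lgen b th g (fun k => M2 t0 k m) ns) in *.
  set (x := INR ns) in *.
  set (y := M2 t0 ns m) in *.
  assert (Hc : 0 < c) by (unfold c; apply Rmult_lt_0_compat; auto; apply exp_pos).
  assert (He : 0 < e) by (unfold e; apply exp_pos).
  assert (Hx : 1 <= x) by (unfold x; apply (le_INR 1); lia).
  assert (Hy : 0 <= y) by (unfold y; apply HM2n; [lra|lia|lia]).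
  assert (Hid : dl * e * y + e * (L2 - (th + dl - th) * x * y) + - L1 + - (eps * (K * exp (K * t0)) * x)
     = (e * L2 - L1 - c * (b * x - th * x * x)) - c * x - c * th * x * x - dl * e * y * (x - 1)).
  { unfold c, K. ring. }
  assert (0 < c * x) by nra.
  assert (0 <= c * th * x * x).
  { apply Rmult_le_pos; [|lra]. apply Rmult_le_pos; [|lra]. apply Rmult_le_pos; lra. }
  assert (0 <= dl * e * y * (x - 1)).
  { apply Rmult_le_pos; [|lra]. apply Rmult_le_pos; [|lra]. apply Rmult_le_pos; lra. }
  lra.
Qed.

Lemma compare b th dl g M M2 :
  0 <= b -> 0 <= th -> 0 <= g -> 0 <= dl ->
  solves_backward b th g M -> nonneg_kernel M ->
  solves_backward b (th+dl) g M2 -> nonneg_kernel M2 ->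
  (forall m, (1 <= m)%nat -> forall T, 0 <= T -> exists B, forall t n, 0 <= t <= T -> (1<=n)%nat -> M2 t n m <= B) ->
  forall t n m, 0 <= t -> (1 <= n)%nat -> (1 <= m)%nat -> exp (dl * t) * M2 t n m <= M t n m.
Proof.
  intros Hb Hth Hg Hdl HM HMn HM2 HM2n HB t n m Ht Hn Hm.
  destruct (Rle_or_lt (exp (dl * t) * M2 t n m) (M t n m)) as [H|H]; auto. exfalso.
  set (d := exp (dl * t) * M2 t n m - M t n m).
  assert (Hd : 0 < d) by (unfold d; lra).
  assert (Hx : 0 < exp ((b+1) * t) * INR n).
  { apply Rmult_lt_0_compat. apply exp_pos. apply lt_0_INR; lia. }
  set (eps := d / (2 * (exp ((b+1) * t) * INR n))).
  assert (Heps : 0 < eps) by (unfold eps; apply Rdiv_lt_0_compat; lra).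
  pose proof (key b th dl g M M2 eps m Hb Hth Hg Hdl Heps Hm HM HMn HM2 HM2n (HB m Hm) t n Ht Hn) as Hk.
  unfold wf in Hk.
  assert (Heq : eps * exp ((b + 1) * t) * INR n = d / 2).
  { assert (0 < INR n) by (apply lt_0_INR; lia).
    assert (0 < exp ((b+1) * t)) by apply exp_pos.
    unfold eps. field. split; lra. }
  rewrite Heq in Hk. unfold d in *. lra.
Qed.

Lemma part1 b th g dl lam lam' :
  0 < b -> 0 < th -> 0 < g -> 0 < dl ->
  Perron_root b th g lam -> Perron_root b (th + dl) g lam' -> lam' <= lam - dl.
Proof.
  intros Hb Hth Hg Hdl [M [[HM [HMn _]] [pi [h [_ [_ [[c [C [Hc [HC Hh]]]] [_ Hright]]]]]]]]
                       [M2 [[HM2 [HM2n _]] [pi2 [h2 [_ [_ [[c2 [C2 [Hc2 [HC2 Hh2]]]] [_ Hright2]]]]]]]].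
  assert (HB : forall m, (1 <= m)%nat -> forall T, 0 <= T -> exists B, forall t n, 0 <= t <= T -> (1<=n)%nat -> M2 t n m <= B).
  { intros m Hm T HT. exists (exp (Rabs lam' * T) * C2 / c2).
    intros t n Ht Hn.
    destruct m as [|m']; [lia|].
    assert (Hle : M2 t n (S m') * h2 (S m') <= exp (lam' * t) * h2 n).
    { apply (term_le_series (fun k => M2 t n (S k) * h2 (S k)) _ m').
      apply Hright2; auto. lra.
      intros k. apply Rmult_le_pos. apply HM2n; [lra|lia|lia].
      destruct (Hh2 (S k)) as [Hk _]; [lia|lra]. }
    destruct (Hh2 (S m')) as [Hl1 _]; [lia|].
    destruct (Hh2 n) as [Hl3 Hl2]; [lia|].
    assert (Hm2p : 0 <= M2 t n (S m')) by (apply HM2n; [lra|lia|lia]).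
    assert (He : exp (lam' * t) <= exp (Rabs lam' * T)).
    { apply exp_mono. apply Rle_trans with (Rabs lam' * t).
      apply Rmult_le_compat_r. lra. apply Rle_abs.
      apply Rmult_le_compat_l. apply Rabs_pos. lra. }
    assert (Hep : 0 < exp (lam' * t)) by apply exp_pos.
    assert (M2 t n (S m') * c2 <= exp (Rabs lam' * T) * C2).
    { apply Rle_trans with (M2 t n (S m') * h2 (S m')).
      apply Rmult_le_compat_l; auto.
      apply Rle_trans with (exp (lam' * t) * h2 n); auto.
      apply Rmult_le_compat; lra. }
    apply (Rmult_le_reg_r c2); auto.
    replace (exp (Rabs lam' * T) * C2 / c2 * c2) with (exp (Rabs lam' * T) * C2) by (field; lra).
    exact H. }
  assert (Hcmp := compare b th dl g M M2 ltac:(lra) ltac:(lra) ltac:(lra) ltac:(lra) HM HMn HM2 HM2n HB).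
  set (A := C * C2 / (c * c2)).
  assert (HA : 0 < A) by (unfold A; apply Rdiv_lt_0_compat; apply Rmult_lt_0_compat; lra).
  assert (Hgrow : forall t, 0 <= t -> exp (lam' * t) <= A * exp ((lam - dl) * t)).
  { intros t Ht.
    set (k0 := C2 / c * exp (- (dl * t))).
    assert (Hk0 : 0 < k0) by (unfold k0; apply Rmult_lt_0_compat; [apply Rdiv_lt_0_compat; lra| apply exp_pos]).
    assert (Hs := is_series_scal_r k0 _ _ (Hright t 1%nat Ht ltac:(lia))).
    assert (Hle : exp (lam' * t) * h2 1%nat <= exp (lam * t) * h 1%nat * k0).
    { apply (series_le _ _ _ _ (Hright2 t 1%nat Ht ltac:(lia)) Hs).
      intros k.
      destruct (Hh2 (S k)) as [_ Hk2]; [lia|].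
      destruct (Hh (S k)) as [Hk1 _]; [lia|].
      assert (Hp2 : 0 <= M2 t 1%nat (S k)) by (apply HM2n; [lra|lia|lia]).
      assert (Hp : 0 <= M t 1%nat (S k)) by (apply HMn; [lra|lia|lia]).
      assert (Hc' := Hcmp t 1%nat (S k) Ht ltac:(lia) ltac:(lia)).
      assert (HM2le : M2 t 1%nat (S k) <= exp (- (dl * t)) * M t 1%nat (S k)).
      { replace (M2 t 1%nat (S k)) with (exp (- (dl * t)) * (exp (dl * t) * M2 t 1%nat (S k))).
        apply Rmult_le_compat_l. left; apply exp_pos. auto.
        rewrite <- Rmult_assoc, <- exp_plus. replace (- (dl * t) + dl * t) with 0 by ring.
        rewrite exp_0. ring. }
      apply Rle_trans with (M2 t 1%nat (S k) * C2). apply Rmult_le_compat_l; auto.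
      apply Rle_trans with (exp (- (dl * t)) * M t 1%nat (S k) * C2). apply Rmult_le_compat_r; lra.
      unfold k0.
      assert (Hq : 1 <= h (S k) / c).
      { apply (Rmult_le_reg_r c); auto. unfold Rdiv. rewrite Rmult_assoc, Rinv_l by lra. lra. }
      assert (Hpp : 0 <= exp (- (dl * t)) * M t 1%nat (S k) * C2).
      { apply Rmult_le_pos. apply Rmult_le_pos; auto. left; apply exp_pos. lra. }
      replace (M t 1%nat (S k) * h (S k) * (C2 / c * exp (- (dl * t))))
        with (exp (- (dl * t)) * M t 1%nat (S k) * C2 * (h (S k) / c)) by (field; lra).
      rewrite <- (Rmult_1_r (exp (- (dl * t)) * M t 1%nat (S k) * C2)) at 1.
      apply Rmult_le_compat_l; auto. }
    destruct (Hh2 1%nat) as [H21 _]; [lia|].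
    destruct (Hh 1%nat) as [_ H11]; [lia|].
    assert (Hel : 0 < exp (lam' * t)) by apply exp_pos.
    assert (Hel2 : 0 < exp (lam * t)) by apply exp_pos.
    assert (Hx : exp (lam' * t) * c2 <= exp (lam * t) * C * k0).
    { apply Rle_trans with (exp (lam' * t) * h2 1%nat). apply Rmult_le_compat_l; lra.
      apply Rle_trans with (exp (lam * t) * h 1%nat * k0); auto.
      apply Rmult_le_compat_r. lra. apply Rmult_le_compat_l; lra. }
    replace ((lam - dl) * t) with (lam * t + - (dl * t)) by ring.
    rewrite exp_plus.
    apply (Rmult_le_reg_r c2); auto.
    apply Rle_trans with (exp (lam * t) * C * k0); auto.
    unfold A, k0. right. field. split; lra. }
  destruct (Rle_or_lt lam' (lam - dl)) as [H|H]; auto. exfalso.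
  set (a := lam' - (lam - dl)).
  assert (Ha : 0 < a) by (unfold a; lra).
  set (t := A / a).
  assert (Ht : 0 < t) by (unfold t; apply Rdiv_lt_0_compat; lra).
  specialize (Hgrow t ltac:(lra)).
  replace (lam' * t) with (a * t + (lam - dl) * t) in Hgrow by (unfold a; ring).
  rewrite exp_plus in Hgrow.
  assert (Hp : 0 < exp ((lam - dl) * t)) by apply exp_pos.
  assert (Hat : a * t = A) by (unfold t; field; lra).
  rewrite Hat in Hgrow.
  assert (He : 1 + A < exp A) by (apply exp_ineq1; lra).
  assert (exp A <= A) by (apply (Rmult_le_reg_r (exp ((lam - dl) * t))); auto).
  lra.
Qed.

Theorem lemma6p3 (beta theta gamma : R) :
  0 < beta -> 0 < theta -> 0 < gamma ->
  (forall delta lam lam' : R, 0 < delta ->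
     Perron_root beta theta gamma lam ->
     Perron_root beta (theta + delta) gamma lam' ->
     lam' <= lam - delta) /\
  (forall delta lam lam' : R, 0 < delta < theta ->
     Perron_root beta theta gamma lam ->
     Perron_root beta (theta - delta) gamma lam' ->
     lam' >= lam + delta).
Proof.
  intros Hb Hth Hg. split.
  - intros delta lam lam' Hd H1 H2. exact (part1 beta theta gamma delta lam lam' Hb Hth Hg Hd H1 H2).
  - intros delta lam lam' [Hd Hdt] H1 H2.
    assert (H1' : Perron_root beta (theta - delta + delta) gamma lam).
    { replace (theta - delta + delta) with theta by ring. exact H1. }
    pose proof (part1 beta (theta - delta) gamma delta lam' lam Hb ltac:(lra) Hg Hd H2 H1'). lra.
Qed.
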